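(* Assume $0<\theta_1\le\theta_2\le\dots\le\theta_N$, $m_i>0$, $\sigma>0$, $p>0$, and let $\mathbf y\in\mathbb R^N_+$ solve $$\sum_{k=1}^N m_k(y_k-y_i)+\sigma(\theta_i-y_i^p)y_i=0,\qquad i=1,\dots,N.$$ Then $\theta_1\le y_1^p\le y_2^p\le\dots\le y_N^p\le\theta_N$, and for every $i$, $$y_i^p\ge\theta_i+\frac{m_{\ge i}-M}{\sigma},\qquad m_{\ge i}=m_i+\dots+m_N,\ M=m_1+\dots+m_N.$$ Moreover, for $i\ne j$, $\theta_i=\theta_j$ if and only if $y_i=y_j$.
   Context: $\mathbb R^N_+$ denotes the set of vectors with all coordinates strictly positive. *)

(* Defs.v *)
From mathcomp Require Import all_boot all_order all_algebra.
From mathcomp Require Import all_classical all_reals all_analysis.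

(* Main.v *)
Require Import Defs.
From mathcomp Require Import all_boot all_order all_algebra.
From mathcomp Require Import all_classical all_reals all_analysis.
From mathcomp Require Import ring lra zify.
Import Order.TTheory GRing.Theory Num.Theory.
Local Open Scope ring_scope.

Lemma lowR (R : realType) (S M L sigma a c e : R) :
  0 < e -> 0 < sigma -> S = e * (M + sigma * (a - c)) -> L * e <= S ->
  c + (L - M) / sigma <= a.
Proof.
move=> He Hs HS HL.
have H : L <= M + sigma * (a - c) by nra.
have : (L - M) / sigma <= a - c by rewrite ler_pdivrMr //; lra.
lra.
Qed.

Lemma upR (R : realType) (S M sigma a c e : R) :
  0 < e -> 0 < sigma -> S = e * (M + sigma * (a - c)) -> S <= M * e -> a <= c.
Proof.
move=> He Hs HS HL.
have H1 : e * (sigma * (a - c)) <= 0 by rewrite HS mulrDr in HL; lra.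
have H2 : sigma * (a - c) <= 0 by rewrite pmulr_rle0 in H1.
have H3 : a - c <= 0 by rewrite pmulr_rle0 in H2.
lra.
Qed.

Lemma downR (R : realType) (S M sigma a c e : R) :
  0 < e -> 0 < sigma -> S = e * (M + sigma * (a - c)) -> M * e <= S -> c <= a.
Proof.
move=> He Hs HS HL; have := @lowR R S M M sigma a c e He Hs HS HL.
by rewrite subrr mul0r addr0.
Qed.

Lemma eqR (R : realType) (S M sigma a c d e : R) :
  0 < e -> 0 < sigma -> S = e * (M + sigma * (a - c)) ->
  S = e * (M + sigma * (a - d)) -> c = d.
Proof.
move=> He Hs H1 H2; move: H1; rewrite H2 => /(mulfI (lt0r_neq0 He)) /addrI.
move=> /(mulfI (lt0r_neq0 Hs)); lra.
Qed.

Lemma keyR (R : realType) (S M sigma a b c d e f : R) :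
  0 < S -> 0 < sigma -> 0 < e -> 0 < f ->
  S = e * (M + sigma * (a - c)) -> S = f * (M + sigma * (b - d)) ->
  e < f -> a < b -> c < d.
Proof.
move=> H1 H2 H4 H3 H6 H5 Hef H7.
have Ai : 0 < M + sigma * (a - c) by nra.
have Aj : 0 < M + sigma * (b - d) by nra.
have : M + sigma * (b - d) < M + sigma * (a - c) by nra.
nra.
Qed.

Theorem lemma5p2 (R : realType) (N : nat)
  (theta m y : 'I_N -> R) (sigma p : R)
  (htheta_pos : forall i, 0 < theta i)
  (htheta_mono : forall i j : 'I_N, (i <= j)%N -> theta i <= theta j)
  (hm : forall i, 0 < m i) (hsigma : 0 < sigma) (hp : 0 < p)
  (hy : forall i, 0 < y i)
  (heq : forall i : 'I_N,
     \sum_(k < N) m k * (y k - y i) + sigma * (theta i - y i `^ p) * y i = 0) :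
  [/\ (forall i : 'I_N, nat_of_ord i = 0%N -> theta i <= y i `^ p),
      (forall i j : 'I_N, (i <= j)%N -> y i `^ p <= y j `^ p),
      (forall i : 'I_N, nat_of_ord i = N.-1 -> y i `^ p <= theta i),
      (forall i : 'I_N,
         theta i + ((\sum_(k < N | (i <= k)%N) m k) - \sum_(k < N) m k) / sigma
           <= y i `^ p)
    & (forall i j : 'I_N, i != j -> (theta i = theta j <-> y i = y j))].
Proof.
set S := \sum_(k < N) m k * y k.
set M := \sum_(k < N) m k.
set z := fun i => y i `^ p.
have hE : forall i, S = y i * (M + sigma * (z i - theta i)).
  move=> i; have := heq i.
  rewrite (eq_bigr (fun k => m k * y k - m k * y i)); last by move=> k _; rewrite mulrBr.
  rewrite big_split /= sumrN -mulr_suml -/S -/M /z => H.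
  have -> : S = S - M * y i + sigma * (theta i - y i `^ p) * y i - (- M * y i + sigma * (theta i - y i `^ p) * y i) by ring.
  rewrite H; ring.
have hS : forall i0 : 'I_N, 0 < S.
  move=> i0; rewrite /S (bigD1 i0) //=.
  apply: ltr_pwDl; first by apply: mulr_gt0.
  by apply: sumr_ge0 => k _; apply: mulr_ge0; apply: ltW.
have hzlt : forall i j, y i < y j -> z i < z j.
  move=> i j h; apply: gt0_ltr_powR => //; rewrite nnegrE ltW //.
have key : forall i j, y i < y j -> theta i < theta j.
  move=> i j h; exact: (@keyR R _ _ _ _ _ _ _ _ _ (hS i) hsigma (hy i) (hy j) (hE i) (hE j) h (hzlt i j h)).
have hD : forall i, \sum_(k < N) m k * (y k - y i) = S - M * y i.
  move=> i; rewrite (eq_bigr (fun k => m k * y k - m k * y i)); last by move=> k _; rewrite mulrBr.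
  by rewrite big_split /= sumrN -mulr_suml.
have mono : forall i j : 'I_N, (i <= j)%N -> y i <= y j.
  move=> i j hij; rewrite leNgt; apply/negP => /(key j i).
  by rewrite ltNge htheta_mono.
have zmono : forall i j : 'I_N, (i <= j)%N -> z i <= z j.
  move=> i j hij; rewrite /z; apply: (ge0_ler_powR (ltW hp)); [by rewrite nnegrE ltW|by rewrite nnegrE ltW|exact: mono].
split.
- move=> i Hi; apply: (@downR R S M sigma (z i) (theta i) (y i)) => //.
  have : 0 <= S - M * y i.
    rewrite -hD; apply: sumr_ge0 => k _; apply: mulr_ge0; first exact: ltW.
    by rewrite subr_ge0; apply: mono; rewrite Hi.
  by rewrite subr_ge0.
- exact: zmono.
- move=> i Hi; apply: (@upR R S M sigma (z i) (theta i) (y i)) => //.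
  have : S - M * y i <= 0.
    rewrite -hD; apply: sumr_le0 => k _; rewrite mulr_ge0_le0 //; first exact: ltW.
    rewrite subr_le0; apply: mono; rewrite Hi; have := ltn_ord k; lia.
  by rewrite subr_le0.
- move=> i; apply: (@lowR R S M _ sigma (z i) (theta i) (y i)) => //.
  rewrite mulr_suml [S](bigID (fun k : 'I_N => (i <= k)%N)) /=.
  apply: (le_trans (_ : _ <= \sum_(k < N | (i <= k)%N) m k * y k)).
  + by apply: ler_sum => k hk; apply: ler_wpM2l; [apply: ltW | apply: mono].
  + rewrite lerDl.
    by apply: sumr_ge0 => k _; apply: mulr_ge0; apply: ltW.
- move=> i j _; split.
  + move=> Ht; case: (ltgtP (y i) (y j)) => // H.
    * by have := key i j H; rewrite Ht ltxx.
    * by have := key j i H; rewrite Ht ltxx.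
  + move=> Hyy; apply: (@eqR R S M sigma (z i) _ _ (y i)) => //.
    by rewrite (hE j) /z Hyy.
Qed.
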